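(* For $c\ge 2.1$ and $\mu\in[0,1/2]$ one has $d_{\mu,c}\le\frac{3-2\mu}{5}$. In particular $2|z|^2\le 3/5$ for all $(z,w)\in\Sigma_{\mu,c}$.
   Context: Restricted three-body problem with Jacobi Hamiltonian $H(q,p)=\tfrac12|p|^2+q_1p_2-q_2p_1-\frac{1-\mu}{|q+(\mu,0)|}-\frac{\mu}{|q-(1-\mu,0)|}$ and effective potential $U(q)=-\tfrac12|q|^2-\frac{1-\mu}{|q+(\mu,0)|}-\frac{\mu}{|q-(1-\mu,0)|}$; the Hill's region at level $-c$ is $\{q:U(q)\le -c\}$. $d_{\mu,c}$ denotes the maximal distance from $(-\mu,0)$ to a point of the connected component of the Hill's region whose closure contains $(-\mu,0)$ (this maximum is attained on the $q_1$-axis at a point $(x_{\mu,c},0)$ with $x_{\mu,c}\in(-\mu,1-\mu)$, $d_{\mu,c}=x_{\mu,c}+\mu$). Levi-Civita regularization: $q+\mu=2z^2$, $p=w/\bar z$ (complex notation); $\Sigma_{\mu,c}$ is the compact component of $K_{\mu,c}^{-1}(0)$ containing $\{z=0\}$, where $K_{\mu,c}=\tfrac12|w|^2+c|z|^2-\tfrac{1-\mu}{2}+2|z|^2(z_1w_2-z_2w_1)-\mu(z_1w_2+z_2w_1)-\frac{\mu|z|^2}{|2z^2-1|}$. *)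

(* Defs.v *)
(* R : realType, R^2 = R * R, C^2 = (R*R)*(R*R) *)
From HB Require Import structures.
From mathcomp Require Import all_boot all_order all_algebra.
From mathcomp Require Import all_classical all_reals all_analysis.
Set Implicit Arguments. Unset Strict Implicit. Unset Printing Implicit Defensive.
Import Order.TTheory GRing.Theory Num.Theory numFieldNormedType.Exports.
Local Open Scope classical_set_scope.
Local Open Scope ring_scope.

Section RTBP.
Variable R : realType.

Definition dist2 (p q : R * R) : R :=
  Num.sqrt ((p.1 - q.1) ^+ 2 + (p.2 - q.2) ^+ 2).

Definition earth (mu : R) : R * R := (- mu, 0).
Definition moon (mu : R) : R * R := (1 - mu, 0).

Definition U_eff (mu : R) (q : R * R) : R :=
  - (q.1 ^+ 2 + q.2 ^+ 2) / 2
  - (1 - mu) / dist2 q (earth mu) - mu / dist2 q (moon mu).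

Definition hill_region (mu c : R) : set (R * R) :=
  [set q | q != earth mu /\ q != moon mu /\ U_eff mu q <= - c].

Definition earth_hill_component (mu c : R) (C : set (R * R)) : Prop :=
  exists2 q, hill_region mu c q &
    C = connected_component (hill_region mu c) q /\ closure C (earth mu).

Definition dmax (mu : R) (C : set (R * R)) : \bar R :=
  ereal_sup [set (dist2 q (earth mu))%:E | q in C].

(* Levi-Civita regularized Hamiltonian; a point of C^2 is ((z1,z2),(w1,w2))
   with z = z1 + i z2, w = w1 + i w2.
   2 z^2 - 1 = (2(z1^2 - z2^2) - 1) + i (4 z1 z2). *)
Definition abs2z2m1 (z : R * R) : R :=
  Num.sqrt ((2 * (z.1 ^+ 2 - z.2 ^+ 2) - 1) ^+ 2 + (4 * z.1 * z.2) ^+ 2).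

Definition K_LC (mu c : R) (x : (R * R) * (R * R)) : R :=
  let z1 := x.1.1 in let z2 := x.1.2 in let w1 := x.2.1 in let w2 := x.2.2 in
  let nz := z1 ^+ 2 + z2 ^+ 2 in
  (w1 ^+ 2 + w2 ^+ 2) / 2 + c * nz - (1 - mu) / 2
  + 2 * nz * (z1 * w2 - z2 * w1) - mu * (z1 * w2 + z2 * w1)
  - mu * nz / abs2z2m1 x.1.

(* zero level set of K (on its domain 2 z^2 <> 1) *)
Definition K_level0 (mu c : R) : set ((R * R) * (R * R)) :=
  [set x | abs2z2m1 x.1 != 0 /\ K_LC mu c x = 0].

(* Sigma_{mu,c}: the component of K^{-1}(0) containing {z = 0}; the points
   of K^{-1}(0) with z = 0 form the circle |w|^2 = 1 - mu, so Sigma is the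
   connected component of any such point. *)
Definition Sigma (mu c : R) (w0 : R * R) : set ((R * R) * (R * R)) :=
  connected_component (K_level0 mu c) ((0, 0), w0).

End RTBP.

(* Main.v *)
Require Import Defs.
From HB Require Import structures.
From mathcomp Require Import all_boot all_order all_algebra.
From mathcomp Require Import all_classical all_reals all_analysis.
From mathcomp Require Import ring lra.
Import Order.TTheory GRing.Theory Num.Theory numFieldNormedType.Exports.
Local Open Scope classical_set_scope.
Local Open Scope ring_scope.

Section Core.
Variable R : realFieldType.
Definition Fm (m r D : R) := (r^+2 - m*(1+r^+2-D^+2) + m^+2)/2 + (1-m)/r + m/D.

Lemma endA (m : R) : 0 <= m -> m <= 1/2 ->
  Fm m ((3-2* m)/5) (1 - (3-2* m)/5) < 21/10.
Proof.
move=> h0 h1.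
have P : 0 < (105 - (3-7* m)^+2)*(3-2* m)*(2+2* m) - 250*(1-m)*(2+2* m) - 250* m*(3-2* m) by nra.
rewrite -subr_gt0.
have -> : 21/10 - Fm m ((3-2* m)/5) (1 - (3-2* m)/5) =
  ((105 - (3-7* m)^+2)*(3-2* m)*(2+2* m) - 250*(1-m)*(2+2* m) - 250* m*(3-2* m)) / (50*(3-2* m)*(2+2* m)).
  rewrite /Fm; field. apply/andP; split; apply/negP => /eqP; lra.
apply: divr_gt0 => //; nra.
Qed.

Lemma endB (m : R) : 0 <= m -> m <= 1/2 ->
  Fm m ((3-2* m)/5) (1 + (3-2* m)/5) < 21/10.
Proof.
move=> h0 h1.
have P : 0 < (105 - 9*(1+m)^+2)*(3-2* m)*(8-2* m) - 250*(1-m)*(8-2* m) - 250* m*(3-2* m) by nra.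
rewrite -subr_gt0.
have -> : 21/10 - Fm m ((3-2* m)/5) (1 + (3-2* m)/5) =
  ((105 - 9*(1+m)^+2)*(3-2* m)*(8-2* m) - 250*(1-m)*(8-2* m) - 250* m*(3-2* m)) / (50*(3-2* m)*(8-2* m)).
  rewrite /Fm; field. apply/andP; split; apply/negP => /eqP; lra.
apply: divr_gt0 => //; nra.
Qed.

Lemma core (m D : R) : 0 <= m -> m <= 1/2 ->
  1 - (3-2* m)/5 <= D -> D <= 1 + (3-2* m)/5 ->
  Fm m ((3-2* m)/5) D < 21/10.
Proof.
move=> h0 h1 hDa hDb.
set r := (3-2* m)/5.
have r0 : 0 < r by rewrite /r; lra.
have a0 : 0 < 1 - r by rewrite /r; lra.
have D0 : 0 < D by lra.
have eA := endA m h0 h1. have eB := endB m h0 h1. rewrite -/r in eA eB.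
rewrite -/r in hDa hDb. clearbody r.
have key : (2*r) * Fm m r D = (1 + r - D) * Fm m r (1 - r) + (D - (1 - r)) * Fm m r (1 + r)
   - m * (D - (1-r)) * (1 + r - D) * (2*r) * (1/2 + 1/((1-r)*(1+r)*D)).
  rewrite /Fm; field. by rewrite !gt_eqF //; lra.
have H1 : 0 <= m * (D - (1-r)) * (1 + r - D) * (2*r) * (1/2 + 1/((1-r)*(1+r)*D)).
  have i0 : 0 <= 1/((1-r)*(1+r)*D).
    apply: divr_ge0; first lra. apply: mulr_ge0; [apply: mulr_ge0|]; lra.
  have p1 : 0 <= m * (D - (1-r)) by apply: mulr_ge0; lra.
  have p2 : 0 <= m * (D - (1-r)) * (1 + r - D) by apply: mulr_ge0; lra.
  have p3 : 0 <= m * (D - (1-r)) * (1 + r - D) * (2*r) by apply: mulr_ge0; lra.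
  apply: mulr_ge0; lra.
have H2 : (2*r) * Fm m r D < (2*r) * (21/10).
  rewrite key. 
  have [hD|hD] := lerP D 1.
    have : (1 + r - D) * Fm m r (1 - r) < (1 + r - D) * (21/10) by rewrite ltr_pM2l; lra.
    have : (D - (1 - r)) * Fm m r (1 + r) <= (D - (1 - r)) * (21/10) by apply: ler_wpM2l; lra.
    lra.
  have : (1 + r - D) * Fm m r (1 - r) <= (1 + r - D) * (21/10) by apply: ler_wpM2l; lra.
  have : (D - (1 - r)) * Fm m r (1 + r) < (D - (1 - r)) * (21/10) by rewrite ltr_pM2l; lra.
  lra.
by rewrite ltr_pM2l in H2; lra.
Qed.
End Core.

Lemma barrier (R : realType) (T : topologicalType) (C : set T) (f : T -> R) (r : R) :
  connected C -> continuous f -> (exists y, C y /\ f y < r) ->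
  (forall y, C y -> f y != r) -> forall y, C y -> f y < r.
Proof.
move=> HC cf [y0 [Cy0 fy0]] hne.
have := HC [set y | C y /\ f y < r].
have H : [set y | C y /\ f y < r] = C.
  apply: HC.
  - by exists y0.
  - exists (f @^-1` [set x | x < r]); first by move: (@open_lt _ r); apply: (continuousP f).1.
    by [].
  - exists (f @^-1` [set x | x <= r]); first by move: (@closed_le _ r); apply: (continuous_closedP f).1.
    apply/seteqP; split => y /= [Cy h]; split => //; first exact: ltW.
    by rewrite lt_neqAle h hne.
move=> _ y Cy. by rewrite -H in Cy; case: Cy.
Qed.

Lemma cfst (T U : topologicalType) : continuous (@fst T U).
Proof. move=> x; exact: cvg_fst. Qed.
Lemma csnd (T U : topologicalType) : continuous (@snd T U).
Proof. move=> x; exact: cvg_snd. Qed.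
Lemma csq (R : realType) (T : topologicalType) (f : T -> R) : continuous f -> continuous (fun x => f x ^+ 2).
Proof. move=> cf x; rewrite /=. under eq_fun do rewrite expr2. exact: (continuousM (cf x) (cf x)). Qed.
Lemma cpl (R : realType) (T : topologicalType) (f g : T -> R) : continuous f -> continuous g -> continuous (fun x => f x + g x).
Proof. move=> cf cg x; exact: (continuousD (cf x) (cg x)). Qed.

Lemma cont1 (R : realType) (mu : R) : continuous (fun q : R * R => (q.1 + mu) ^+ 2 + q.2 ^+ 2).
Proof.
apply: cpl; apply: csq; last exact: csnd.
apply: cpl; first exact: cfst. move=> x; exact: cvg_cst.
Qed.

Lemma cont2 (R : realType) : continuous (fun x : (R * R) * (R * R) => x.1.1 ^+ 2 + x.1.2 ^+ 2).
Proof.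
apply: cpl; apply: csq => y.
  exact: (continuous_comp (cfst _ _ y) (cfst _ _ y.1)).
exact: (continuous_comp (cfst _ _ y) (csnd _ _ y.1)).
Qed.

Arguments Fm {R}.
Arguments core {R m D}.
Lemma Dbounds (R : realFieldType) (r v1 v2 D : R) : 0 < r -> r < 1 -> 0 <= D ->
  v1 ^+ 2 + v2 ^+ 2 = r ^+ 2 -> D ^+ 2 = (v1 - 1) ^+ 2 + v2 ^+ 2 ->
  1 - r <= D /\ D <= 1 + r.
Proof.
move=> r0 r1 D0 hv hD.
have hv1 : v1 ^+ 2 <= r ^+ 2 by rewrite -hv; nra.
have a1 : v1 <= r by nra.
have a2 : - r <= v1 by nra.
have b1 : (1 - r) ^+ 2 <= D ^+ 2 by rewrite hD; nra.
have b2 : D ^+ 2 <= (1 + r) ^+ 2 by rewrite hD; nra.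
split; nra.
Qed.

Arguments Dbounds {R r v1 v2 D}.
Lemma hill_bar (R : realType) (mu c : R) (q : R * R) : 21/10 <= c -> 0 <= mu -> mu <= 1/2 ->
  (q.1 + mu) ^+ 2 + q.2 ^+ 2 = ((3 - 2 * mu) / 5) ^+ 2 -> - c < U_eff mu q.
Proof.
move=> hc hm0 hm1 hf.
set r := (3 - 2 * mu) / 5 in hf *.
have r0 : 0 < r by rewrite /r; lra.
have r1 : r < 1 by rewrite /r; lra.
have dE : dist2 q (earth mu) = r.
  rewrite /dist2 /= opprK subr0 hf sqrtr_sqr ger0_norm //; lra.
set D := dist2 q (moon mu).
have D0 : 0 <= D by exact: sqrtr_ge0.
have hD : D ^+ 2 = (q.1 + mu - 1) ^+ 2 + q.2 ^+ 2.
  rewrite /D /dist2 /= sqr_sqrtr; last by rewrite addr_ge0 // sqr_ge0.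
  congr (_ ^+ 2 + _); ring.
have [Da Db] := Dbounds r0 r1 D0 hf hD.
have := core hm0 hm1 Da Db. rewrite -/r => hF.
have -> : U_eff mu q = - Fm mu r D.
  rewrite /U_eff dE /Fm -/D.
  have e : q.1 ^+ 2 + q.2 ^+ 2 = r ^+ 2 - mu * (1 + r ^+ 2 - D ^+ 2) + mu ^+ 2.
    by rewrite hD -hf; ring.
  rewrite e; ring.
lra.
Qed.

Lemma K_bar (R : realType) (mu c z1 z2 w1 w2 : R) : 21/10 <= c -> 0 <= mu -> mu <= 1/2 ->
  z1 ^+ 2 + z2 ^+ 2 = ((3 - 2 * mu) / 5) / 2 -> abs2z2m1 (z1, z2) != 0 ->
  K_LC mu c ((z1, z2), (w1, w2)) != 0.
Proof.
move=> hc hm0 hm1 hn hD0.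
set r := (3 - 2 * mu) / 5 in hn.
have r0 : 0 < r by rewrite /r; lra.
have r1 : r < 1 by rewrite /r; lra.
set D := abs2z2m1 (z1, z2) in hD0.
have D0 : 0 <= D by exact: sqrtr_ge0.
have Dp : 0 < D by rewrite lt_neqAle eq_sym hD0.
set v1 := 2 * (z1 ^+ 2 - z2 ^+ 2).
set v2 := 4 * z1 * z2.
have hv : v1 ^+ 2 + v2 ^+ 2 = r ^+ 2.
  have -> : r = 2 * (z1 ^+ 2 + z2 ^+ 2) by rewrite hn; field.
  rewrite /v1 /v2; ring.
have hD : D ^+ 2 = (v1 - 1) ^+ 2 + v2 ^+ 2.
  rewrite /D /abs2z2m1 /= sqr_sqrtr; last by rewrite addr_ge0 // sqr_ge0.
  by [].
have [Da Db] := Dbounds r0 r1 D0 hv hD.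
have := core hm0 hm1 Da Db. rewrite -/r => hF.
set n := z1 ^+ 2 + z2 ^+ 2 in hn.
set s := (v1 - mu) ^+ 2 + v2 ^+ 2.
have hs : s = r ^+ 2 - mu * (1 + r ^+ 2 - D ^+ 2) + mu ^+ 2.
  by rewrite hD -hv /s; ring.
set b1 := - (2 * n + mu) * z2.
set b2 := (2 * n - mu) * z1.
have eK : K_LC mu c ((z1, z2), (w1, w2)) =
   ((w1 + b1) ^+ 2 + (w2 + b2) ^+ 2) / 2 - n * s / 2 + c * n - (1 - mu) / 2 - mu * n / D.
  rewrite /K_LC /= -/D -/n /b1 /b2 /s /v1 /v2 /n; field; rewrite gt_eqF // ; lra.
have e2 : - n * s / 2 + c * n - (1 - mu) / 2 - mu * n / D = n * (c - Fm mu r D).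
  rewrite /Fm -hs hn. field. by rewrite !gt_eqF.
have np : 0 < n by rewrite hn; lra.
have pos : 0 < n * (c - Fm mu r D) by apply: mulr_gt0; lra.
have sq : 0 <= ((w1 + b1) ^+ 2 + (w2 + b2) ^+ 2) / 2 by apply: divr_ge0; [apply: addr_ge0; apply: sqr_ge0|lra].
rewrite eK; apply/negP => /eqP. lra.
Qed.

Arguments hill_bar {R mu c q}.
Arguments K_bar {R mu c z1 z2} w1 w2.
Arguments barrier {R T C f r}.
Theorem lemma4p1 (R : realType) (mu c : R) :
  21 / 10 <= c -> 0 <= mu -> mu <= 1 / 2 ->
  (forall C : set (R * R), earth_hill_component mu c C ->
     (dmax mu C <= ((3 - 2 * mu) / 5)%:E)%E) /\
  (forall w0 : R * R, K_level0 mu c ((0, 0), w0) ->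
     forall x, Sigma mu c w0 x ->
       2 * (x.1.1 ^+ 2 + x.1.2 ^+ 2) <= 3 / 5).
Proof.
move=> hc hm0 hm1.
have r0 : 0 < (3 - 2 * mu) / 5 by lra.
have r1 : (3 - 2 * mu) / 5 < 1 by lra.
split.
- move=> C [q0 hq0 [HCdef Hcl]].
  set r := (3 - 2 * mu) / 5 in r0 r1 *.
  set f := fun q : R * R => (q.1 + mu) ^+ 2 + q.2 ^+ 2.
  have cf : continuous f by exact: cont1.
  have HC : connected C by rewrite HCdef; exact: component_connected.
  have sub : C `<=` hill_region mu c by rewrite HCdef; exact: connected_component_sub.
  have ex : exists y, C y /\ f y < r ^+ 2.
    have nb : nbhs (earth mu) (f @^-1` [set x | x < r ^+ 2]).
      apply: open_nbhs_nbhs; split.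
        by move: (@open_lt _ (r ^+ 2)); apply: (continuousP f).1.
      rewrite /f /earth /= addNr expr0n /= addr0.
      by apply: exprn_gt0.
    have [y [Cy hy]] := Hcl _ nb.
    by exists y.
  have hne : forall y, C y -> f y != r ^+ 2.
    move=> y /sub [_ [_ hU]]; apply/negP => /eqP hf.
    have := hill_bar hc hm0 hm1 hf. lra.
  have all := barrier HC cf ex hne.
  rewrite /dmax; apply: ge_ereal_sup => _ [q Cq <-]; rewrite lee_fin.
  have -> : dist2 q (earth mu) = Num.sqrt (f q) by rewrite /dist2 /f /= opprK subr0.
  rewrite -(ger0_norm (ltW r0)) -sqrtr_sqr; apply: ltW; rewrite ltr_sqrt ?exprn_gt0 //.
  exact: all.
- move=> w0 hw0 x Sx.
  set r := (3 - 2 * mu) / 5 in r0 r1 *.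
  set g := fun x : (R * R) * (R * R) => x.1.1 ^+ 2 + x.1.2 ^+ 2.
  have cg : continuous g by exact: cont2.
  have HC : connected (Sigma mu c w0) by exact: component_connected.
  have sub : Sigma mu c w0 `<=` K_level0 mu c by exact: connected_component_sub.
  have ex : exists y, Sigma mu c w0 y /\ g y < r / 2.
    exists ((0, 0), w0); split; first exact: connected_component_refl.
    rewrite /g /= expr0n /= addr0; lra.
  have hne : forall y, Sigma mu c w0 y -> g y != r / 2.
    case=> [[z1 z2] [w1 w2]] /sub [hD hK]; apply/negP => /eqP hn.
    by move: (K_bar w1 w2 hc hm0 hm1 hn hD); rewrite hK eqxx.
  have := barrier HC cg ex hne x Sx. rewrite /g /r. lra.
Qed.
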